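(* Let $\mathbb O=\{-m,\dots,0,\dots,M\}$ with integers $m,M\ge1$, and $\theta=0$. For every $x(0)\in\mathbb O^n$: if there exists a finite legal update sequence starting from $x(0)$ along which the opinion trajectory reaches the consensus state $(0,\dots,0)$, then there exists a finite legal update sequence starting from $x(0)$ containing no crossing update along which the opinion trajectory reaches $(0,\dots,0)$.
   Context: Let $n\ge1$, $\mathcal V=\{1,\dots,n\}$, and let $W=(w_{ij})$ be an $n\times n$ row-stochastic matrix. For $x\in\mathbb O^n$, $i\in\mathcal V$, $z\in\mathbb O$, define $C^i_{\mathrm{social}}(z;x)=\sum_{j=1}^n w_{ij}|z-x_j|$ and $P_i(x)=\{z\in\mathbb O: C^i_{\mathrm{social}}(z;x)\le C^i_{\mathrm{social}}(x_i;x),\ |z-\theta|\le |x_i-\theta|\}$. A legal update sequence from $x(0)$ is a finite sequence $(i_1,z_1),\dots,(i_T,z_T)$ with $i_t\in\mathcal V$, generating $x(1),\dots,x(T)$ where $x(t)$ is obtained from $x(t-1)$ by setting coordinate $i_t$ to $z_t$, such that $z_t\in P_{i_t}(x(t-1))$ for every $t$. The update at step $t$ is a crossing update if $(x_{i_t}(t)-\theta)(x_{i_t}(t-1)-\theta)<0$. *)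

(* Defs.v *)
From mathcomp Require Import all_boot all_order all_algebra.
From mathcomp Require Import reals.
Set Implicit Arguments. Unset Strict Implicit. Unset Printing Implicit Defensive.
Import Order.TTheory GRing.Theory Num.Theory.
Local Open Scope ring_scope.

Definition inO (m M : nat) (z : int) : bool := (- (m%:Z) <= z) && (z <= M%:Z).

Definition state (n : nat) := {ffun 'I_n -> int}.

Definition row_stochastic (R : realType) (n : nat) (W : 'M[R]_n) : Prop :=
  (forall i j, 0 <= W i j) /\ (forall i, \sum_(j < n) W i j = 1).

Definition C_social (R : realType) (n : nat) (W : 'M[R]_n) (x : state n)
  (i : 'I_n) (z : int) : R :=
  \sum_(j < n) W i j * (`|z - x j|%:~R).

Definition inP (R : realType) (m M : nat) (theta : int) (n : nat) (W : 'M[R]_n)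
  (x : state n) (i : 'I_n) (z : int) : Prop :=
  [/\ inO m M z,
      C_social W x i z <= C_social W x i (x i) &
      `|z - theta| <= `|x i - theta| ].


Definition upd (n : nat) (x : state n) (i : 'I_n) (z : int) : state n :=
  [ffun j => if j == i then z else x j].

Fixpoint legal (R : realType) (m M : nat) (theta : int) (n : nat) (W : 'M[R]_n)
  (x : state n) (s : seq ('I_n * int)) : Prop :=
  match s with
  | [::] => True
  | (i, z) :: s' => inP m M theta W x i z /\ legal m M theta W (upd x i z) s'
  end.

Fixpoint traj (n : nat) (x : state n) (s : seq ('I_n * int)) : seq (state n) :=
  match s with
  | [::] => [:: x]
  | (i, z) :: s' => x :: traj (upd x i z) s'
  end.

Fixpoint no_crossing (n : nat) (theta : int) (x : state n)
  (s : seq ('I_n * int)) : bool :=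
  match s with
  | [::] => true
  | (i, z) :: s' => ~~ ((z - theta) * (x i - theta) < 0)
                    && no_crossing theta (upd x i z) s'
  end.

Definition consensus0 (n : nat) : state n := [ffun => 0].

(* Main.v *)
Require Import Defs.
From mathcomp Require Import all_boot all_order all_algebra.
From mathcomp Require Import reals zify ring lra.
Import Order.TTheory GRing.Theory Num.Theory.
Local Open Scope ring_scope.

Lemma t1 (z xi a : int) : 0 <= z * xi -> `|z| <= `|xi| -> `|z| - `|xi| <= `|z - a| - `|xi - a|.
Proof. move=> h1 h2. nia. Qed.

Lemma t2 (z xi a : int) : z * xi < 0 ->
  (`|xi| + `|z|) * `|a| <= `|xi| * `|z - a| + `|z| * `|xi - a|.
Proof.
move=> h.
have e : `|xi| + `|z| = `|xi - z| by nia.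
rewrite e -normrM -!normrM.
have -> : (xi - z) * a = z * (xi - a) - xi * (z - a) by ring.
rewrite [X in _ <= X]addrC; exact: ler_normB.
Qed.

Section S.
Variables (R : realType) (n : nat) (W : 'M[R]_n).
Hypothesis W0 : forall i j, 0 <= W i j.

Definition rel (x y : state n) := forall j, y j = x j \/ y j = 0.

Lemma Cdiff (x y : state n) i z : rel x y -> y i = x i -> 0 <= z * x i -> `|z| <= `|x i| ->
  C_social W y i z - C_social W y i (y i) <= C_social W x i z - C_social W x i (x i).
Proof.
move=> hr hi h1 h2; rewrite /C_social hi -!sumrB.
apply: ler_sum => j _; rewrite -!mulrBr; apply: ler_wpM2l => //.
rewrite -!intrB ler_int.
case: (hr j) => ->; first by [].
rewrite !subr0; exact: t1.
Qed.

Lemma Cconv (x : state n) i z : z * x i < 0 ->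
  C_social W x i z <= C_social W x i (x i) -> C_social W x i 0 <= C_social W x i (x i).
Proof.
move=> h hc.
have pos : (0 : R) < (`|x i| + `|z|)%:~R by rewrite ltr0z; nia.
rewrite -(ler_pM2r pos).
apply: (@le_trans _ _ ((`|x i|)%:~R * C_social W x i z + (`|z|)%:~R * C_social W x i (x i))).
  rewrite /C_social !mulr_sumr mulr_suml -big_split /=.
  apply: ler_sum => j _.
  rewrite -mulrA.
  set w := W i j; set a := (`|x i|%:~R : R); set b := (`|z|%:~R : R).
  have -> : a * (w * `|z - x j|%:~R) + b * (w * `|x i - x j|%:~R) =
            w * (a * `|z - x j|%:~R + b * `|x i - x j|%:~R) by ring.
  apply: ler_wpM2l; first exact: W0.
  rewrite /a /b.
  rewrite -!intrM -intrD ler_int sub0r normrN mulrC; exact: t2.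
rewrite intrD mulrDr [X in _ <= X + _]mulrC.
rewrite [X in _ <= _ + X]mulrC lerD2r ler_wpM2l // ler0z; exact: normr_ge0.
Qed.

Variables (m M : nat).

Lemma inO0 : inO m M 0.
Proof. rewrite /inO; apply/andP; split; lia. Qed.

Lemma sim s : forall x y, rel x y -> legal m M 0 W x s ->
  exists s', [/\ legal m M 0 W y s', no_crossing 0 y s' &
     (consensus0 n \in traj x s -> consensus0 n \in traj y s')].
Proof.
elim: s => [|[i z] s IH] x y hr /=.
  move=> _; exists [::]; split => //=.
  rewrite !inE => /eqP hx; apply/eqP/ffunP => j.
  by case: (hr j) => ->; rewrite -?hx ffunE.
case=> [[hO hC hN] hl].
rewrite !subr0 in hN.
pose v := if (y i == x i) && (0 <= z * x i) then z else 0.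
have hr' : rel (upd x i z) (upd y i v).
  move=> j; rewrite !ffunE; case: (j == i); last exact: hr.
  by rewrite /v; case: ifP => _; [left|right].
have [s' [l' nc' tr']] := IH _ _ hr' hl.
exists ((i, v) :: s'); split => /=.
- split => //; rewrite /v; case: ifP => [/andP [/eqP e hz] | hne].
    split => //; last by rewrite !subr0 e.
    rewrite -subr_le0; apply: (le_trans (Cdiff _ _ _ _ hr e hz hN)); by rewrite subr_le0.
  split; [exact: inO0 | | by rewrite subrr normr0 normr_ge0].
  case: (hr i) => e; last by rewrite e.
  rewrite e eqxx /= in hne.
  have hz : z * x i < 0 by rewrite ltNge hne.
  have c0 := Cconv _ _ _ hz hC.
  rewrite -subr_le0; apply: (le_trans (Cdiff _ _ _ 0 hr e _ _)); rewrite ?mul0r ?normr0 ?normr_ge0 //.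
  by rewrite subr_le0.
- apply/andP; split => //; rewrite !subr0 /v; case: ifP => [/andP [/eqP e hz] | _].
    by rewrite e -leNgt.
  by rewrite mul0r ltxx.
- rewrite !inE => /orP [/eqP hx | /tr' ->]; last by rewrite orbT.
  apply/orP; left; apply/eqP/ffunP => j.
  by case: (hr j) => ->; rewrite -?hx ffunE.
Qed.
End S.


Theorem lemma3 (R : realType) (n m M : nat) (W : 'M[R]_n) (x0 : state n) :
  (1 <= n)%N -> (1 <= m)%N -> (1 <= M)%N ->
  row_stochastic W ->
  (forall j, inO m M (x0 j)) ->
  (exists s : seq ('I_n * int),
      legal m M 0 W x0 s /\ consensus0 n \in traj x0 s) ->
  exists s : seq ('I_n * int),
    [/\ legal m M 0 W x0 s, no_crossing 0 x0 s & consensus0 n \in traj x0 s].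
Proof.
move=> _ _ _ [W0 _] _ [s [hl ht]].
have [s' [l' nc' tr']] := @sim R n W W0 m M s x0 x0 (fun j => or_introl erefl) hl.
by exists s'; split => //; apply: tr'.
Qed.
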